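(* Let $G$ be a reaction network with $s$ species and $m$ reactions, with stoichiometric matrix $\mathcal{N}\in\mathbb{Z}^{s\times m}$, reactant matrix $\mathcal{X}\in\mathbb{Z}^{s\times m}$, and dimension $r:=\operatorname{rank}(\mathcal{N})$. (i) If there is no $\alpha\in\mathbb{R}^m_{>0}$ with $\mathcal{N}\alpha=\mathbf 0$, then $G$ admits no positive steady state for any $\kappa\in\mathbb{R}^m_{>0}$. (ii) Suppose there exists $\alpha\in\mathbb{R}^m_{>0}$ with $\mathcal{N}\alpha=\mathbf 0$. Let $l^{(1)},\dots,l^{(t)}\in\mathbb{R}^m_{\ge0}$ be the extreme rays of the flux cone $\mathcal{F}(\mathcal{N})$, let $\lambda=(\lambda_1,\dots,\lambda_t)$ and $p=(p_1,\dots,p_s)$ be indeterminates, let $$J(p,\lambda):=\mathcal{N}\,\operatorname{diag}\Big(\sum_{i=1}^t\lambda_i l^{(i)}\Big)\,\mathcal{X}^\top\,\operatorname{diag}(p),$$ and let $$B(p,\lambda):=\sum_{I\subseteq\{1,\dots,s\},\ |I|=r}\det\big(J(p,\lambda)[I,I]\big)\in\mathbb{Q}[p,\lambda],$$ where $J[I,I]$ is the principal submatrix with rows and columns indexed by $I$. Then $G$ is degenerate if and only if $B(p,\lambda)$ is the zero polynomial; equivalently, $G$ admits at least one nondegenerate positive steady state (for some $\kappa\in\mathbb{R}^m_{>0}$) if and only if $B(p,\lambda)$ is not the zero polynomial.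
   Context: A reaction network $G$ has species $X_1,\dots,X_s$ and reactions $\mu_{1j}X_1+\dots+\mu_{sj}X_s\xrightarrow{\kappa_j}\nu_{1j}X_1+\dots+\nu_{sj}X_s$, $j=1,\dots,m$, with nonnegative integer coefficients, $(\mu_{1j},\dots,\mu_{sj})\neq(\nu_{1j},\dots,\nu_{sj})$, and rate constants $\kappa_j>0$. The stoichiometric matrix $\mathcal{N}$ has $(i,j)$-entry $\nu_{ij}-\mu_{ij}$; the reactant matrix $\mathcal{X}$ has $(i,j)$-entry $\mu_{ij}$; the stoichiometric subspace $S$ is the column space of $\mathcal{N}$. Under mass-action kinetics the dynamics are $\dot x=f(\kappa,x):=\mathcal{N}v(\kappa,x)$ with $v_j(\kappa,x)=\kappa_j\prod_{i=1}^s x_i^{\mu_{ij}}$. For $\kappa^*\in\mathbb{R}^m_{>0}$, a positive steady state is $x^*\in\mathbb{R}^s_{>0}$ with $f(\kappa^*,x^* )=\mathbf 0$; it is degenerate if the image of the Jacobian $\operatorname{Jac}_f(\kappa^*,x^* )$ restricted to $S$ is not all of $S$. The network $G$ is called degenerate if all of its positive steady states (over all $\kappa\in\mathbb{R}^m_{>0}$) are degenerate, and nondegenerate if it admits at least one nondegenerate positive steady state. The flux cone is $\mathcal{F}(\mathcal{N}):=\{\alpha\in\mathbb{R}^m_{\ge0}:\mathcal{N}\alpha=\mathbf 0\}$. *)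

(* Defs.v *)
From HB Require Import structures.
From mathcomp Require Import all_boot all_order all_algebra.
From mathcomp Require Import mpoly.
From mathcomp Require Import reals.
Set Implicit Arguments. Unset Strict Implicit. Unset Printing Implicit Defensive.
Import Order.TTheory GRing.Theory Num.Theory.
Local Open Scope ring_scope.

Section ReactionNetwork.
Variables (R : realType) (s m : nat).
(* reactant coefficients mu i j and product coefficients nu i j *)
Variables (mu nu : 'M[nat]_(s, m)).

Definition stoich : 'M[R]_(s, m) := \matrix_(i, j) ((nu i j)%:R - (mu i j)%:R).
Definition reactant : 'M[R]_(s, m) := \matrix_(i, j) (mu i j)%:R.

Definition rate_poly (kappa : 'I_m -> R) (j : 'I_m) : {mpoly R[s]} :=
  (kappa j)%:MP * \prod_(i < s) ('X_i ^+ mu i j).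

Definition f_poly (kappa : 'I_m -> R) (i : 'I_s) : {mpoly R[s]} :=
  \sum_(j < m) stoich i j *: rate_poly kappa j.

Definition f_eval (kappa : 'I_m -> R) (x : 'I_s -> R) : 'cV[R]_s :=
  \col_i (f_poly kappa i).@[x].

Definition jac (kappa : 'I_m -> R) (x : 'I_s -> R) : 'M[R]_s :=
  \matrix_(i, k) (mderiv k (f_poly kappa i)).@[x].

Definition in_S (w : 'cV[R]_s) : Prop := exists a : 'cV[R]_m, w = stoich *m a.

Definition positive_steady_state (kappa : 'I_m -> R) (x : 'I_s -> R) : Prop :=
  (forall i, 0 < x i) /\ f_eval kappa x = 0.

Definition nondegenerate_at (kappa : 'I_m -> R) (x : 'I_s -> R) : Prop :=
  forall w : 'cV[R]_s, in_S w <->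
    (exists y : 'cV[R]_s, in_S y /\ w = jac kappa x *m y).

Definition degenerate_at (kappa : 'I_m -> R) (x : 'I_s -> R) : Prop :=
  ~ nondegenerate_at kappa x.

Definition network_degenerate : Prop :=
  forall (kappa : 'I_m -> R) (x : 'I_s -> R), (forall j, 0 < kappa j) ->
    positive_steady_state kappa x -> degenerate_at kappa x.

Definition network_nondegenerate : Prop :=
  exists (kappa : 'I_m -> R) (x : 'I_s -> R), (forall j, 0 < kappa j) /\
    positive_steady_state kappa x /\ nondegenerate_at kappa x.

Definition in_flux_cone (a : 'cV[R]_m) : Prop :=
  (forall j, 0 <= a j 0) /\ stoich *m a = 0.

Definition extreme_ray_gen (l : 'cV[R]_m) : Prop :=
  in_flux_cone l /\ l != 0 /\
  forall a b : 'cV[R]_m, in_flux_cone a -> in_flux_cone b -> l = a + b ->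
    (exists c : R, 0 <= c /\ a = c *: l) /\ (exists c : R, 0 <= c /\ b = c *: l).

Definition extreme_rays_of_flux_cone (t : nat) (l : 'I_t -> 'cV[R]_m) : Prop :=
  (forall k, extreme_ray_gen (l k)) /\
  (forall k k', k != k' -> ~ (exists c : R, 0 < c /\ l k = c *: l k')) /\
  (forall v, extreme_ray_gen v -> exists k c, 0 < c /\ v = c *: l k).

(* Polynomial ring in the indeterminates p_1..p_s, lambda_1..lambda_t *)
Definition pvar (t : nat) (i : 'I_s) : {mpoly R[s + t]} := 'X_(lshift t i).
Definition lvar (t : nat) (k : 'I_t) : {mpoly R[s + t]} := 'X_(rshift s k).

Definition Jpl (t : nat) (l : 'I_t -> 'cV[R]_m) : 'M[{mpoly R[s + t]}]_s :=
  map_mx (fun c => c%:MP) stoich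
  *m diag_mx (\row_j (\sum_(k < t) lvar k * ((l k) j 0)%:MP))
  *m (map_mx (fun c => c%:MP) reactant)^T
  *m diag_mx (\row_i pvar t i).

(* principal minor of A indexed by I (rows/cols in increasing order) *)
Definition principal_minor (T : comRingType) (n : nat) (A : 'M[T]_n)
    (I : {set 'I_n}) : T :=
  \det (\matrix_(a < #|I|, b < #|I|) A (@enum_val _ (mem I) a) (@enum_val _ (mem I) b)).

Definition Bpoly (t : nat) (l : 'I_t -> 'cV[R]_m) : {mpoly R[s + t]} :=
  \sum_(I : {set 'I_s} | #|I| == \rank stoich) principal_minor (Jpl l) I.

End ReactionNetwork.

(* Main.v *)
Require Import Defs.
From HB Require Import structures.
From mathcomp Require Import all_boot all_order all_algebra.
From mathcomp Require Import mpoly.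
From mathcomp Require Import reals.
From mathcomp Require Import fingroup perm.
From Stdlib Require Import Classical_Prop Classical_Pred_Type.
Import Order.TTheory GRing.Theory Num.Theory.
Local Open Scope ring_scope.

Set Implicit Arguments. Unset Strict Implicit. Unset Printing Implicit Defensive.

Lemma det_mulmx_exp (R : comRingType) r s (D : 'M[R]_(r, s)) (C : 'M[R]_(s, r)) :
  \det (D *m C) = \sum_(f : {ffun 'I_r -> 'I_s})
     (\prod_i D i (f i)) * \det (\matrix_(i, j) C (f i) j).
Proof.
rewrite /(\det (D *m C)).
pose AB (sg : 'S_r) i k := D i k * C k (sg i).
transitivity (\sum_(sg : 'S_r) \sum_(f : {ffun 'I_r -> 'I_s}) (-1) ^+ sg * \prod_i AB sg i (f i)).
  apply: eq_bigr => sg _; rewrite -big_distrr /=; congr (_ * _).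
  rewrite -(bigA_distr_bigA (AB sg)) /=.
  by apply: eq_bigr => i _; rewrite mxE.
rewrite exchange_big; apply: eq_bigr => f _ /=.
rewrite /(\det _) big_distrr /=; apply: eq_bigr => sg _.
rewrite /AB big_split /= mulrCA; congr (_ * (_ * _)).
by apply: eq_bigr => i _; rewrite mxE.
Qed.

Section CB.
Variables (R : comRingType) (r s : nat) (D : 'M[R]_(r, s)) (C : 'M[R]_(s, r)).

Let T (f : {ffun 'I_r -> 'I_s}) : R :=
  (\prod_i D i (f i)) * \det (\matrix_(i, j) C (f i) j).

Lemma T_ninj (f : {ffun 'I_r -> 'I_s}) : ~~ injectiveb f -> T f = 0.
Proof.
case/injectivePn => i1 [i2 Di12 Ef12].
by rewrite /T (determinant_alternate Di12) ?mulr0 // => j; rewrite !mxE Ef12.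
Qed.

Lemma CB_inj (g : 'I_r -> 'I_s) : injective g ->
  \det (\matrix_(a, b) (C *m D) (g a) (g b)) =
  \sum_(f : {ffun 'I_r -> 'I_s} | [forall i, f i \in codom g]) T f.
Proof.
move=> ginj.
have -> : \matrix_(a, b) (C *m D) (g a) (g b) =
   (\matrix_(a, k) C (g a) k) *m (\matrix_(k, b) D k (g b)).
  by apply/matrixP => a b; rewrite !mxE; apply: eq_bigr => k _; rewrite !mxE.
rewrite det_mulmx mulrC -det_mulmx det_mulmx_exp.
pose phi (h : {ffun 'I_r -> 'I_r}) : {ffun 'I_r -> 'I_s} := [ffun i => g (h i)].
have phiinj : injective phi.
  move=> h1 h2 /ffunP E; apply/ffunP => i; apply: ginj.
  by have := E i; rewrite !ffunE.
have -> : \sum_(f : {ffun 'I_r -> 'I_s} | [forall i, f i \in codom g]) T f =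
          \sum_(f in phi @: setT) T f.
  apply: eq_bigl => f; apply/idP/idP.
    move/forallP => Hf.
    apply/imsetP; exists [ffun i => iinv (Hf i)] => //.
    by apply/ffunP => i; rewrite !ffunE f_iinv.
  case/imsetP => h _ ->; apply/forallP => i; rewrite ffunE.
  exact: codom_f.
rewrite big_imset /=; last by move=> ? ? _ _; apply: phiinj.
apply: eq_big => [h|h _]; first by rewrite inE.
rewrite /T; congr (_ * _).
  by apply: eq_bigr => i _; rewrite !mxE ffunE.
by congr (\det _); apply/matrixP => i j; rewrite !mxE ffunE.
Qed.


Lemma det_cast n n' (e : n = n') (F : 'I_n -> 'I_n -> R) :
  \det (\matrix_(a, b) F a b) =
  \det (\matrix_(a < n', b < n') F (cast_ord (esym e) a) (cast_ord (esym e) b)).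
Proof.
case: n' / e; congr (\det _); apply/matrixP => a b; rewrite !mxE.
by rewrite !cast_ord_id.
Qed.

Lemma cauchy_binet :
  \det (D *m C) = \sum_(I : {set 'I_s} | #|I| == r) principal_minor (C *m D) I.
Proof.
rewrite det_mulmx_exp.
rewrite (bigID (fun f : {ffun 'I_r -> 'I_s} => injectiveb f)) /=.
rewrite [X in _ + X]big1 ?addr0; last by move=> f /T_ninj.
rewrite (partition_big (fun f : {ffun 'I_r -> 'I_s} => [set f i | i in 'I_r])
   (fun I : {set 'I_s} => #|I| == r)) /=; last first.
  move=> f /injectiveP fi; rewrite card_imset //.
  by rewrite card_ord.
apply: eq_bigr => I /eqP cI.
rewrite /principal_minor (det_cast cI).
have H := @CB_inj (fun a => @enum_val _ (mem I) (cast_ord (esym cI) a)).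
rewrite /= in H; rewrite H; last first.
  by move=> a b /enum_val_inj /cast_ord_inj.
symmetry; rewrite (bigID (fun f : {ffun 'I_r -> 'I_s} => injectiveb f)) /=.
rewrite [X in _ + X]big1 ?addr0; last by move=> f /andP[_ /T_ninj].
apply: eq_bigl => f.
have codomE : forall k, (k \in codom (fun a => @enum_val _ (mem I) (cast_ord (esym cI) a))) = (k \in I).
  move=> k; apply/codomP/idP.
    by case=> a ->; apply: enum_valP.
  move=> kI; exists (cast_ord cI (enum_rank_in kI k)).
  by rewrite cast_ordK enum_rankK_in.
case fi: (injectiveb f); rewrite ?andbF ?andbT //=.
apply/forallP/eqP; last first.
  by move=> E i; rewrite codomE -E; apply: imset_f.
move=> Hf; apply/eqP; rewrite eqEcard; apply/andP; split.
  by apply/subsetP => k /imsetP [i _ ->]; have := Hf i; rewrite codomE.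

rewrite cI card_imset ?cardsT ?card_ord //; exact/injectiveP.
Qed.

End CB.

Lemma nondeg_iff (F : fieldType) s m (N : 'M[F]_(s, m)) (M : 'M[F]_(m, s)) :
  (forall w : 'cV_s, (exists a : 'cV_m, w = N *m a) <->
      (exists y : 'cV_s, (exists a : 'cV_m, y = N *m a) /\ w = (N *m M) *m y))
  <-> \sum_(I : {set 'I_s} | #|I| == \rank N) principal_minor (N *m M) I != 0.
Proof.
set C := col_base N; set E := row_base N.
have NCE : forall X : 'cV_m, N *m X = C *m (E *m X) by move=> X; rewrite mulmxA mulmx_base.
have [C' HC'] : exists C', C' *m C = 1%:M by apply/row_fullP; apply: col_base_full.
have [E' HE'] : exists E', E *m E' = 1%:M by apply/row_freeP; apply: row_base_free.
set D := E *m M.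
have JCD : N *m M = C *m D by rewrite /D mulmxA mulmx_base.
have inS : forall w : 'cV_s, (exists a : 'cV_m, w = N *m a) <-> exists b, w = C *m b.
  move=> w; split => [[a ->]|[b ->]].
    by exists (E *m a); rewrite mulmxA mulmx_base.
  by exists (E' *m b); rewrite NCE (mulmxA E) HE' mul1mx.
rewrite JCD -cauchy_binet.
have Cinj : forall b1 b2 : 'cV_(\rank N), C *m b1 = C *m b2 -> b1 = b2.
  by move=> b1 b2; apply: row_full_inj; apply: col_base_full.
clearbody C E D.
split.
  move=> H; apply/negP => /det0P [u u0 uK].
  have [i ui] : exists i, u 0 i != 0.
    apply/existsP; move: u0; apply: contraR; rewrite negb_exists => /forallP H0.
    apply/eqP/matrixP => a j; rewrite ord1 mxE; exact/eqP/negPn/H0.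
  pose b : 'cV_(\rank N) := \col_k ((k == i)%:R : F).
  have Sb : exists a, C *m b = N *m a by apply/inS; exists b.
  have [y [/inS [c ->] Eb]] := (H (C *m b)).1 Sb.
  have {}Eb : b = D *m C *m c by apply: Cinj; rewrite Eb !mulmxA.
  have : u *m b = u *m (D *m C) *m c by rewrite Eb mulmxA.
  rewrite uK mul0mx => /matrixP /(_ 0 0).
  rewrite !mxE (bigD1 i) //= big1 ?addr0 => [|k kn]; last by rewrite !mxE (negbTE kn) mulr0.
  by rewrite mxE eqxx mulr1 => /eqP; rewrite (negbTE ui).
move=> dK w; split; last first.
  by case=> y [_ ->]; apply/inS; exists (D *m y); rewrite mulmxA.
case/inS => b ->.
have Ku : D *m C \in unitmx by rewrite unitmxE unitfE.
exists (C *m (invmx (D *m C) *m b)); split; first by apply/inS; eexists.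
rewrite -mulmxA; congr (C *m _); by rewrite !mulmxA mulmxV // mul1mx.
Qed.

Section Mink.
Variables (R : realFieldType) (s m : nat) (N : 'M[R]_(s, m)).

Definition cone (a : 'cV[R]_m) := (forall j, 0 <= a j 0) /\ N *m a = 0.
Definition ext (l : 'cV[R]_m) := cone l /\ l != 0 /\
  forall a b : 'cV[R]_m, cone a -> cone b -> l = a + b ->
    (exists c : R, 0 <= c /\ a = c *: l) /\ (exists c : R, 0 <= c /\ b = c *: l).

Definition supp (v : 'cV[R]_m) := [set j | v j 0 != 0].

Lemma ex_argmin (T : finType) (P : pred T) (F : T -> R) j0 : P j0 ->
  exists2 i, P i & forall j, P j -> F i <= F j.
Proof. by move=> Pj0; case: (arg_minP F Pj0) => i Pi H; exists i. Qed.

Lemma step (v u : 'cV[R]_m) j0 : (forall j, 0 <= v j 0) ->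
  (forall j, v j 0 = 0 -> u j 0 = 0) -> 0 < u j0 0 ->
  exists c, 0 < c /\ (forall j, 0 <= v j 0 - c * u j 0) /\
     (exists j1, v j1 0 != 0 /\ v j1 0 - c * u j1 0 = 0).
Proof.
move=> v0 vu uj0.
have [i ui Hi] := @ex_argmin _ (fun j => 0 < u j 0) (fun j => v j 0 / u j 0) j0 uj0.
have vi : v i 0 != 0 by apply/eqP => /vu E; move: ui; rewrite E ltxx.
have vip : 0 < v i 0 by rewrite lt_def vi v0.
exists (v i 0 / u i 0); split; first by rewrite divr_gt0.
split.
  move=> j; rewrite subr_ge0; case: (ltP 0 (u j 0)) => uj.
    by rewrite -ler_pdivlMr //; apply: Hi.
  apply: le_trans (v0 j); rewrite mulr_ge0_le0 //.
  by rewrite divr_ge0 // ltW.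
exists i; split => //.
by rewrite divfK ?subrr // gt_eqF.
Qed.

Lemma supp_sub (v w : 'cV[R]_m) : (forall j, v j 0 = 0 -> w j 0 = 0) ->
  (exists j1, v j1 0 != 0 /\ w j1 0 = 0) -> (#|supp w| < #|supp v|)%N.
Proof.
move=> H [j1 [v1 w1]]; apply: proper_card; rewrite properE; apply/andP; split.
  apply/subsetP => j; rewrite !inE; apply: contra => /eqP /H ->; by [].
apply/subsetPn; exists j1; by rewrite !inE ?v1 ?w1 ?eqxx.
Qed.

Lemma mink t (l : 'I_t -> 'cV[R]_m) :
  (forall v, ext v -> exists k c, 0 < c /\ v = c *: l k) ->
  forall v, cone v -> exists lam : 'I_t -> R,
    (forall k, 0 <= lam k) /\ v = \sum_k lam k *: l k.
Proof.
move=> Hl v.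
move: {2}#|supp v| (leqnn #|supp v|) => n; elim: n v => [|n IH] v.
  rewrite leqn0 cards_eq0 => /eqP s0 _.
  exists (fun _ => 0); split => //; rewrite big1; last by move=> k _; rewrite scale0r.
  apply/matrixP => j i; rewrite ord1 mxE; apply/eqP.
  by have := in_set0 j; rewrite -s0 inE => /negbT; rewrite negbK.
move=> sv [v0 Nv].
case: (eqVneq v 0) => [->|vn0].
  exists (fun _ => 0); split => //; rewrite big1 // => k _; by rewrite scale0r.
have [jv vjv] : exists jv, v jv 0 != 0.
  apply/existsP; move: vn0; apply: contraR; rewrite negb_exists => /forallP H0.
  apply/eqP/matrixP => a j; rewrite ord1 mxE; exact/eqP/negPn/H0.
have vjvp : 0 < v jv 0 by rewrite lt_def vjv v0.
have cpos : forall (x : 'cV_m) c, (forall j, 0 <= x j 0) -> x = c *: v -> 0 <= c.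
  move=> x c x0 xc; have := x0 jv; rewrite xc mxE.
  by rewrite pmulr_lge0.
case: (classic (forall u : 'cV_m, N *m u = 0 ->
   (forall j, v j 0 = 0 -> u j 0 = 0) -> exists c, u = c *: v)) => [HA|HnA].
  have ev : ext v.
    split; first by [].
    split; first by [].
    move=> a b [a0 Na] [b0 Nb] vab.
    have ent : forall j, v j 0 = a j 0 + b j 0 by move=> j; rewrite vab mxE.
    have sa : forall j, v j 0 = 0 -> a j 0 = 0.
      move=> j; rewrite ent => /eqP; rewrite paddr_eq0 // => /andP[/eqP -> _].
      by [].
    have sb : forall j, v j 0 = 0 -> b j 0 = 0.
      move=> j; rewrite ent => /eqP; rewrite paddr_eq0 // => /andP[_ /eqP ->].
      by [].
    split.
      have [c ac] := HA a Na sa.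
      by exists c; split => //; apply: (cpos a).
    have [c bc] := HA b Nb sb.
    by exists c; split => //; apply: (cpos b).
  have [k [c [c0 vc]]] := Hl v ev.
  exists (fun k' => if k' == k then c else 0); split.
    by move=> k'; case: eqP => // _; apply: ltW.
  rewrite (bigD1 k) //= eqxx big1 ?addr0 // => k' /negbTE ->.
  by rewrite scale0r.
have [u Hu] := not_all_ex_not _ _ HnA.
have [Nu Hu2] := imply_to_and _ _ Hu.
have [su nc] := imply_to_and _ _ Hu2.
have [u1 [Nu1 [su1 [nc' [j0 uj0]]]]] : exists u1 : 'cV_m, N *m u1 = 0 /\
    (forall j, v j 0 = 0 -> u1 j 0 = 0) /\ ~ (exists c, u1 = c *: v) /\
    exists j0, 0 < u1 j0 0.
  have [ju uju] : exists ju, u ju 0 != 0.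
    apply/existsP; apply: contraT; rewrite negb_exists => /forallP H0.
    exfalso; apply: nc; exists 0; rewrite scale0r.
    apply/matrixP => a j; rewrite ord1 !mxE; exact/eqP/negPn/H0.
  case: (ltP 0 (u ju 0)) => uj.
    by exists u; do 3!split => //; exists ju.
  exists (- u); split; first by rewrite mulmxN Nu oppr0.
  split; first by move=> j /su; rewrite mxE => ->; rewrite oppr0.
  split.
    by case=> c Ec; apply: nc; exists (- c); rewrite scaleNr -Ec opprK.
  by exists ju; rewrite mxE oppr_gt0 lt_neqAle uju uj.
have [c [c0 [wpos [j1 [vj1 wj1]]]]] := step v0 su1 uj0.
pose w := v - c *: u1.
have went : forall j, w j 0 = v j 0 - c * u1 j 0 by move=> j; rewrite !mxE.
have cw : cone w.
  split; first by move=> j; rewrite went.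
  by rewrite /w mulmxBr Nv -scalemxAr Nu1 scaler0 subrr.
have sw : (#|supp w| < #|supp v|)%N.
  apply: supp_sub.
    by move=> j vj; rewrite went vj (su1 j vj) mulr0 subrr.
  by exists j1; rewrite went.
have [jw wjw] : exists jw, w jw 0 != 0.
  apply/existsP; apply: contraT; rewrite negb_exists => /forallP H0.
  exfalso; apply: nc'; exists c^-1.
  have w0 : w = 0 by apply/matrixP => a j; rewrite ord1 [RHS]mxE; apply/eqP; move: (H0 a); rewrite negbK.
  have : v = c *: u1 by apply/eqP; rewrite -subr_eq0; apply/eqP.
  by move=> ->; rewrite scalerA mulVf ?scale1r // gt_eqF.
have wjwp : 0 < w jw 0 by rewrite lt_def wjw (cw.1 jw).
have swv : forall j, v j 0 = 0 -> w j 0 = 0.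
  by move=> j vj; rewrite went vj (su1 j vj) mulr0 subrr.
have [c2 [c20 [zpos [j2 [vj2 zj2]]]]] := step v0 swv wjwp.
pose z := v - c2 *: w.
have zent : forall j, z j 0 = v j 0 - c2 * w j 0 by move=> j; rewrite !mxE.
have cz : cone z.
  split; first by move=> j; rewrite zent.
  by rewrite /z mulmxBr Nv -scalemxAr cw.2 scaler0 subrr.
have sz : (#|supp z| < #|supp v|)%N.
  apply: supp_sub.
    by move=> j vj; rewrite zent vj (swv j vj) mulr0 subrr.
  by exists j2; rewrite zent.
have [lz [lz0 Ez]] := IH z (leq_trans sz sv) cz.
have [lw [lw0 Ew]] := IH w (leq_trans sw sv) cw.
exists (fun k => lz k + c2 * lw k); split.
  by move=> k; rewrite addr_ge0 // mulr_ge0 // ltW.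
have -> : v = z + c2 *: w by rewrite /z subrK.
rewrite Ez Ew scaler_sumr -big_split /=; apply: eq_bigr => k _.
by rewrite scalerDl scalerA.
Qed.

End Mink.

Section PolyPos.
Variable R : realFieldType.

Lemma poly_pos0 (P : {poly R}) : (forall z, 0 < z -> P.[z] = 0) -> P = 0.
Proof.
move=> H.
apply: (@roots_geq_poly_eq0 _ P [seq (i.+1)%:R | i <- iota 0 (size P)]).
- apply/allP => x /mapP [i _ ->]; apply/rootP; apply: H; by rewrite ltr0Sn.
- rewrite map_inj_uniq ?iota_uniq // => i j /eqP; rewrite eqr_nat => /eqP [] //.
- by rewrite size_map size_iota.
Qed.

Lemma muni_eval n (p : {mpoly R[n.+1]}) (v : 'I_n.+1 -> R) :
  p.@[v] = (map_poly (meval (fun i : 'I_n => v (widen_ord (leqnSn n) i))) (muni p)).[v ord_max].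
Proof.
rewrite muniE rmorph_sum horner_sum mevalE; apply: eq_bigr => m _.
rewrite -!mul_polyC !rmorphM /= !map_polyC map_polyXn /= !hornerE. 
rewrite mevalZ mevalX big_ord_recr /= mulrA; congr (_ * _ * _).
by apply: eq_bigr => i _; rewrite mnmE.
Qed.


Lemma lift_max_widen n (j : 'I_n) : lift ord_max j = widen_ord (leqnSn n) j.
Proof. by apply: val_inj; rewrite /= /bump leqNgt ltn_ord. Qed.

Lemma mnm_split n (m m0 : 'X_{1..n.+1}) :
  ([multinom m (widen_ord (leqnSn n) i) | i < n] ==
   [multinom m0 (widen_ord (leqnSn n) i) | i < n]) && (m ord_max == m0 ord_max)
  = (m == m0).
Proof.
apply/andP/eqP => [[/eqP E1 /eqP E2]|->]; last by rewrite !eqxx.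
apply/mnmP => i; case: (unliftP ord_max i) => [j ->|->] //.
rewrite lift_max_widen; have := congr1 (fun mm : 'X_{1..n} => mm j) E1.
by rewrite /= !mnmE.
Qed.

Lemma sum_msupp_delta n (p : {mpoly R[n]}) m0 :
  \sum_(m <- msupp p) p@_m * (m == m0)%:R = p@_m0.
Proof.
case: (boolP (m0 \in msupp p)) => Hm0.
  rewrite (bigD1_seq m0) ?msupp_uniq //= eqxx mulr1 big1 ?addr0 // => m /negbTE ->.
  by rewrite mulr0.
rewrite big1_seq ?memN_msupp_eq0 // => m /andP[_ mm].
case: eqP => [E|_]; last by rewrite mulr0.
by move: mm Hm0; rewrite E => ->.
Qed.

Lemma muni_coef n (p : {mpoly R[n.+1]}) (m0 : 'X_{1..n.+1}) :
  ((muni p)`_(m0 ord_max))@_[multinom m0 (widen_ord (leqnSn n) i) | i < n] = p@_m0.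
Proof.
rewrite -(sum_msupp_delta p m0) muniE coef_sum raddf_sum /=.
apply: eq_bigr => m _.
rewrite coefZ coefXn mulr_natr mcoeffMn mcoeffZ mcoeffX.
rewrite -(mnm_split m m0) [m0 ord_max == _]eq_sym.
by case: (_ == _); case: (_ == _); rewrite /= ?mulr1 ?mulr0 ?mulr0n ?mulr1n.

Qed.

Lemma muni_inj n (p : {mpoly R[n.+1]}) : muni p = 0 -> p = 0.
Proof.
move=> H; apply/mpolyP => m0; rewrite mcoeff0 -muni_coef H coef0 mcoeff0 //.
Qed.

Lemma mpoly_pos0 n (p : {mpoly R[n]}) :
  (forall v : 'I_n -> R, (forall i, 0 < v i) -> p.@[v] = 0) -> p = 0.
Proof.
elim: n p => [|n IH] p H.
  have E := H (fun _ => 1) (fun _ => ltr01).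
  rewrite (nvar0_mpolyC p) mevalC in E.
  by rewrite (nvar0_mpolyC p) E mpolyC0.
apply: muni_inj; apply/polyP => k; rewrite coef0; apply: IH => v' v'0.
pose P := map_poly (meval v') (muni p).
have P0 : P = 0.
  apply: poly_pos0 => z z0.
  pose v : 'I_n.+1 -> R := fun i => if unlift ord_max i is Some j then v' j else z.
  have vw : map_poly (meval (fun i : 'I_n => v (widen_ord (leqnSn n) i))) (muni p) = P.
    apply: eq_map_poly => q; apply: meval_eq => i.
    by rewrite /v -lift_max_widen liftK.
  have := muni_eval p v; rewrite vw.
  have -> : v ord_max = z by rewrite /v unlift_none.
  move=> <-; apply: H => i; rewrite /v; case: unliftP => [j _|_] //.
have := congr1 (fun q : {poly R} => q`_k) P0.
by rewrite /P coef_map /= coef0.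
Qed.

End PolyPos.

Section Net.
Variables (R : realType) (s m : nat) (mu nu : 'M[nat]_(s, m)).
Local Notation N := (stoich R mu nu).
Local Notation X := (reactant R mu).

Definition Jmat (v : 'I_m -> R) (y : 'I_s -> R) : 'M[R]_s :=
  N *m diag_mx (\row_j v j) *m X^T *m diag_mx (\row_i y i).

Lemma Jmat_mul v y : Jmat v y = N *m (diag_mx (\row_j v j) *m X^T *m diag_mx (\row_i y i)).
Proof. by rewrite /Jmat !mulmxA. Qed.

Lemma map_Jpl t (l : 'I_t -> 'cV[R]_m) (w : 'I_(s + t) -> R) :
  map_mx (meval w) (Jpl mu nu l) =
  Jmat (fun j => \sum_(k < t) w (rshift s k) * l k j 0) (fun i => w (lshift t i)).
Proof.
rewrite /Jpl /Jmat !map_mxM map_trmx !map_diag_mx.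
have mc : forall (p q : nat) (A : 'M[R]_(p, q)), map_mx (meval w) (map_mx (fun c => c%:MP) A) = A.
  by move=> p q A; apply/matrixP => i j; rewrite !mxE mevalC.
rewrite !mc; congr (_ *m diag_mx _ *m _ *m diag_mx _).
  apply/matrixP => i j; rewrite !mxE rmorph_sum.
  apply: eq_bigr => k _; rewrite rmorphM /= mevalC /lvar; congr (_ * _); exact: mevalXU.
by apply/matrixP => i j; rewrite !mxE /pvar; exact: mevalXU.
Qed.


Definition rates (kappa : 'I_m -> R) (x : 'I_s -> R) (j : 'I_m) : R :=
  kappa j * \prod_(i < s) x i ^+ mu i j.

Lemma rate_eval kappa x j : (rate_poly mu kappa j).@[x] = rates kappa x j.
Proof.
rewrite /rate_poly /rates mevalM mevalC rmorph_prod; congr (_ * _).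
by apply: eq_bigr => i _; rewrite rmorphXn /= mevalXU.
Qed.

Lemma f_eval_eq kappa x : f_eval mu nu kappa x = N *m \col_j rates kappa x j.
Proof.
apply/matrixP => i k; rewrite ord1 !mxE /f_poly raddf_sum /=.
by apply: eq_bigr => j _; rewrite mevalZ rate_eval !mxE.
Qed.

Lemma deriv_mono (e : 'I_s -> nat) (x : 'I_s -> R) k : x k != 0 ->
  (mderiv k (\prod_(i < s) 'X_i ^+ e i)).@[x] =
  (e k)%:R * (\prod_(i < s) x i ^+ e i) * (x k)^-1.
Proof.
move=> xk.
have -> : \prod_(i < s) 'X_i ^+ e i = 'X_[[multinom e i | i < s]] :> {mpoly R[s]}.
  by rewrite mpolyXE_id; apply: eq_bigr => i _; rewrite mnmE.
rewrite mderivX mevalZ mevalX mnmE.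
case: (posnP (e k)) => [->|ek]; first by rewrite !mul0r.
rewrite -mulrA; congr (_ * _); apply: (mulIf xk); rewrite mulfVK //.
rewrite (bigD1 k) //= [RHS](bigD1 k) //= mulrAC; congr (_ * _).
  by rewrite mnmBE mnm1E eqxx mnmE subn1 -exprSr prednK.
by apply: eq_bigr => i ik; rewrite mnmBE mnm1E mnmE eq_sym (negbTE ik) subn0.
Qed.

Lemma jac_eq kappa x : (forall i, x i != 0) ->
  jac mu nu kappa x = Jmat (rates kappa x) (fun i => (x i)^-1).
Proof.
move=> x0; apply/matrixP => i k; rewrite /jac /Jmat !mul_mx_diag !mxE.
rewrite /f_poly [mderiv k _]raddf_sum raddf_sum /= mulr_suml.
apply: eq_bigr => j _.
rewrite mderivZ mevalZ /rate_poly mderiv_mulC mevalM mevalC deriv_mono //.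
rewrite !mxE /rates.
by rewrite !mulrA [_ * _ * (mu k j)%:R]mulrAC [_ * (mu k j)%:R * _]mulrAC.
Qed.

End Net.

Lemma pm_map (A B : comRingType) (f : {rmorphism A -> B}) n (M : 'M[A]_n) I :
  f (principal_minor M I) = principal_minor (map_mx f M) I.
Proof.
rewrite /principal_minor -det_map_mx; congr (\det _).
by apply/matrixP => a b; rewrite !mxE.
Qed.

Section Main.
Variables (R : realType) (s m : nat) (mu nu : 'M[nat]_(s, m)).
Local Notation N := (stoich R mu nu).

Lemma Jmat_ext (v v' : 'I_m -> R) (y y' : 'I_s -> R) :
  v =1 v' -> y =1 y' -> Jmat mu nu v y = Jmat mu nu v' y'.
Proof.
move=> ev ey; rewrite /Jmat; congr (_ *m diag_mx _ *m _ *m diag_mx _).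
  by apply/matrixP => i j; rewrite !mxE ev.
by apply/matrixP => i j; rewrite !mxE ey.
Qed.

Lemma Beval t (l : 'I_t -> 'cV[R]_m) (w : 'I_(s + t) -> R) :
  (Bpoly mu nu l).@[w] = \sum_(I : {set 'I_s} | #|I| == \rank N)
     principal_minor (Jmat (R:=R) mu nu (fun j => \sum_(k < t) w (rshift s k) * l k j 0)
                        (fun i => w (lshift t i))) I.
Proof.
rewrite /Bpoly rmorph_sum; apply: eq_bigr => I _.
by rewrite (pm_map (meval w)) map_Jpl.
Qed.

Lemma nondeg_at_iff (kappa : 'I_m -> R) (x : 'I_s -> R) : (forall i, x i != 0) ->
  nondegenerate_at mu nu kappa x <->
  \sum_(I : {set 'I_s} | #|I| == \rank N)
     principal_minor (Jmat mu nu (rates mu kappa x) (fun i => (x i)^-1)) I != 0.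
Proof.
move=> x0; rewrite /nondegenerate_at /in_S jac_eq // Jmat_mul.
exact: nondeg_iff.
Qed.


Lemma rates_pos (kappa : 'I_m -> R) (x : 'I_s -> R) :
  (forall j, 0 < kappa j) -> (forall i, 0 < x i) -> forall j, 0 < rates mu kappa x j.
Proof.
move=> k0 x0 j; rewrite /rates mulr_gt0 // prodr_gt0 // => i _.
by rewrite exprn_gt0.
Qed.

Lemma col_sum t (l : 'I_t -> 'cV[R]_m) (lam : 'I_t -> R) :
  \col_j (\sum_k lam k * l k j 0) = \sum_k lam k *: l k.
Proof.
apply/matrixP => j i; rewrite ord1 summxE !mxE.
by apply: eq_bigr => k _; rewrite mxE.
Qed.

Lemma steady_cone (kappa : 'I_m -> R) (x : 'I_s -> R) :
  (forall j, 0 < kappa j) -> positive_steady_state mu nu kappa x ->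
  cone N (\col_j rates mu kappa x j).
Proof.
move=> k0 [x0 fe]; split.
  by move=> j; rewrite mxE ltW // rates_pos.
by rewrite -f_eval_eq.
Qed.

Lemma part_i :
  (~ exists alpha : 'cV[R]_m, (forall j, 0 < alpha j 0) /\ N *m alpha = 0) ->
  forall (kappa : 'I_m -> R) (x : 'I_s -> R), (forall j, 0 < kappa j) ->
    ~ positive_steady_state mu nu kappa x.
Proof.
move=> Hno kappa x k0 ss; apply: Hno.
have [_ Nv] := steady_cone k0 ss.
exists (\col_j rates mu kappa x j); split => // j.
by rewrite mxE rates_pos //; case: ss.
Qed.

Definition mkw t (y : 'I_s -> R) (lam : 'I_t -> R) (i : 'I_(s + t)) : R :=
  match split i with inl a => y a | inr k => lam k end.

Lemma mkwl t y (lam : 'I_t -> R) a : mkw y lam (lshift t a) = y a.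
Proof. by rewrite /mkw (unsplitK (inl _ a)). Qed.

Lemma mkwr t y (lam : 'I_t -> R) k : mkw y lam (rshift s k) = lam k.
Proof. by rewrite /mkw (unsplitK (inr _ k)). Qed.


Lemma B0_deg t (l : 'I_t -> 'cV[R]_m) :
  (forall v, extreme_ray_gen mu nu v -> exists k c, 0 < c /\ v = c *: l k) ->
  Bpoly mu nu l = 0 -> network_degenerate R mu nu.
Proof.
move=> Hcov B0 kappa x k0 ss Hnd.
have x0 : forall i, x i != 0 by move=> i; rewrite gt_eqF //; case: ss => xp _; exact: xp.
have [lam [lam0 Ev]] := mink (N:=N) Hcov (steady_cone k0 ss).
have := (nondeg_at_iff kappa x0).1 Hnd.
have := Beval l (mkw (fun a => (x a)^-1) lam); rewrite B0 meval0 => E.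
rewrite (@Jmat_ext _ (fun j => \sum_(k < t) mkw (fun a => (x a)^-1) lam (rshift s k) * l k j 0)
   _ (fun i => mkw (fun a => (x a)^-1) lam (lshift t i))).
- by rewrite -E eqxx.
- move=> j; have := congr1 (fun M : 'cV[R]_m => M j 0) Ev; rewrite /= mxE => ->.
  by rewrite summxE; apply: eq_bigr => k _; rewrite mkwr mxE.
- by move=> i; rewrite mkwl.
Qed.


Lemma Bnz_nondeg t (l : 'I_t -> 'cV[R]_m) (alpha : 'cV[R]_m) :
  (forall j, 0 < alpha j 0) -> N *m alpha = 0 ->
  (forall k, extreme_ray_gen mu nu (l k)) ->
  (forall v, extreme_ray_gen mu nu v -> exists k c, 0 < c /\ v = c *: l k) ->
  Bpoly mu nu l != 0 -> network_nondegenerate R mu nu.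
Proof.
move=> apos Na Hext Hcov Bnz.
have [w [wpos Bw]] : exists w : 'I_(s + t) -> R, (forall i, 0 < w i) /\ (Bpoly mu nu l).@[w] != 0.
  apply: NNPP => H; apply: (negP Bnz); apply/eqP; apply: mpoly_pos0 => v vpos.
  apply/eqP; apply: contraT => ne; exfalso; apply: H; by exists v.
have cover : forall j, exists k, 0 < l k j 0.
  move=> j; apply: NNPP => H.
  have [lam [lam0 Ea]] := mink (N:=N) Hcov (conj (fun j => ltW (apos j)) Na).
  have := apos j; rewrite Ea summxE big1 ?ltxx // => k _.
  rewrite mxE; have -> : l k j 0 = 0; last by rewrite mulr0.
  apply/eqP; rewrite eq_le ((Hext k).1.1 j) andbT leNgt; apply/negP => lp.
  by apply: H; exists k.
pose lamw k := w (rshift s k).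
pose x a := (w (lshift t a))^-1.
pose vv j := \sum_(k < t) lamw k * l k j 0.
have vvpos : forall j, 0 < vv j.
  move=> j; have [k lk] := cover j; rewrite /vv (bigD1 k) //=.
  apply: (@lt_le_trans _ _ (lamw k * l k j 0)); first by apply: mulr_gt0; [apply: wpos | exact: lk].
  rewrite lerDl; apply: sumr_ge0 => k' _.
  by apply: mulr_ge0; [apply: ltW; apply: wpos | apply: ((Hext k').1.1 j)].
have xpos : forall a, 0 < x a by move=> a; rewrite invr_gt0.
pose kappa j := vv j / \prod_(i < s) x i ^+ mu i j.
have Pp : forall j, 0 < \prod_(i < s) x i ^+ mu i j.
  by move=> j; apply: prodr_gt0 => i _; rewrite exprn_gt0.
have rk : forall j, rates mu kappa x j = vv j.
  by move=> j; rewrite /rates /kappa mulrC mulrA mulrC mulrA mulVf ?mul1r // gt_eqF.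
exists kappa, x; split; first by move=> j; rewrite divr_gt0.
have ss : positive_steady_state mu nu kappa x.
  split => //; rewrite f_eval_eq.
  have -> : \col_j rates mu kappa x j = \sum_k lamw k *: l k.
    by rewrite -col_sum; apply/matrixP => j i; rewrite !mxE rk.
  rewrite mulmx_sumr big1 // => k _; by rewrite -scalemxAr (Hext k).1.2 scaler0.
split => //.
apply/(nondeg_at_iff kappa (fun i => lt0r_neq0 (xpos i))).
move: Bw; rewrite Beval.
rewrite (@Jmat_ext _ (fun j => \sum_(k < t) w (rshift s k) * l k j 0)
   _ (fun i => w (lshift t i))) //.
by move=> i; rewrite /x invrK.
Qed.

End Main.

Unset Implicit Arguments.

Theorem theorem1 (R : realType) (s m : nat) (mu nu : 'M[nat]_(s, m))
  (Hreac : forall j : 'I_m, col j mu != col j nu) :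
  (* (i) *)
  ((~ exists alpha : 'cV[R]_m,
        (forall j, 0 < alpha j 0) /\ stoich R mu nu *m alpha = 0) ->
   forall (kappa : 'I_m -> R) (x : 'I_s -> R), (forall j, 0 < kappa j) ->
     ~ positive_steady_state mu nu kappa x)
  /\
  (* (ii) *)
  ((exists alpha : 'cV[R]_m,
        (forall j, 0 < alpha j 0) /\ stoich R mu nu *m alpha = 0) ->
   forall (t : nat) (l : 'I_t -> 'cV[R]_m),
     extreme_rays_of_flux_cone mu nu l ->
     (network_degenerate R mu nu <-> Bpoly mu nu l = 0) /\
     (network_nondegenerate R mu nu <-> Bpoly mu nu l != 0)).
Proof.
split; first exact: part_i.
move=> [alpha [apos Na]] t l [Hext [_ Hcov]].
have deg_nd : network_degenerate R mu nu -> network_nondegenerate R mu nu -> False.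
  by move=> D [kappa [x [k0 [ss nd]]]]; exact: (D kappa x k0 ss nd).
split; split.
- move=> D; apply/eqP; apply: contraT => Bnz; exfalso.
  exact: deg_nd D (Bnz_nondeg apos Na Hext Hcov Bnz).
- exact: B0_deg Hcov.
- move=> ND; apply/negP => /eqP B0; exact: deg_nd (B0_deg Hcov B0) ND.
- exact: Bnz_nondeg apos Na Hext Hcov.
Qed.
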